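(* Consider the real linear measurement model $\bm{y}=\bm{A}\bm{x}+\bm{w}$ with $\bm{A}\in\mathbb{R}^{m\times n}$ having i.i.d. entries $\mathcal{N}(0,1/m)$, $\bm{x}\in\mathbb{R}^n$ having i.i.d. entries drawn from the least-favorable distribution $$p_x=\tfrac{\epsilon}{2}\Delta_{x=-\mu}+(1-\epsilon)\Delta_{x=0}+\tfrac{\epsilon}{2}\Delta_{x=\mu},\qquad \epsilon\in(0,1],$$ in the limit $\mu\to\infty$, and $\bm{w}$ additive white Gaussian noise with i.i.d. entries $\mathcal{N}(0,\sigma_w^2)$ where $\sigma_w^2=\delta\sigma_0^2$, $\delta=m/n$, and $\sigma_0^2>0$ is a constant. Apply the AMP algorithm with the soft-thresholding estimator and optimally tuned threshold (described in the context). Then, asymptotically ($m,n\to\infty$ with $m/n\to\delta$), the number of measurements that minimizes the MSE is $$\delta^{\dagger}=2M(\epsilon,\alpha^{\dagger}),$$ which is independent of the noise variance (i.e. of $\sigma_0^2$).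
   Context: AMP iterates $\bm{x}^{t+1}=\eta(\bm{A}^{T}\bm{r}^{t}+\bm{x}^{t})$, $\bm{r}^{t}=\bm{y}-\bm{A}\bm{x}^{t}+\frac{1}{\delta}\langle\eta'(\bm{A}^{T}\bm{r}^{t-1}+\bm{x}^{t-1})\rangle\bm{r}^{t-1}$ (with $\langle\bm v\rangle=\frac1n\sum_i v_i$, $\bm r^0=\bm y$, $\bm x^0=\bm 0$), where $\eta$ is componentwise soft thresholding $\eta(\beta,\lambda)=\mathrm{sign}(\beta)\max(|\beta|-\lambda,0)$ with threshold $\lambda^t=\alpha^{\dagger}\sigma_e^t$. Its asymptotic performance is described by state evolution: $(\sigma_e^{t+1})^2=\frac{1}{\delta}\mathrm{Err}_{t+1}+\sigma_w^2$, with $\mathrm{Err}_{t+1}=M(\epsilon,\alpha^\dagger)(\sigma_e^t)^2$ in the limit $\mu\to\infty$, where $$M(\epsilon,\alpha)=\epsilon(1+\alpha^2)+(1-\epsilon)\left[2(1+\alpha^2)\Phi(-\alpha)-2\alpha\phi(\alpha)\right],$$ $\phi$ and $\Phi$ are the standard Gaussian density and CDF, and $\alpha^{\dagger}=\arg\min_{\alpha\ge 0}M(\epsilon,\alpha)$. AMP is assumed to converge, i.e. the state evolution reaches a fixed point $\sigma_e^\infty$, and the MSE is $\mathrm{Err}=\lim_{n\to\infty}\frac1n\mathbb{E}\|\bm{x}-\hat{\bm x}\|^2$, given by the fixed-point value $\mathrm{Err}_\infty$ of the state evolution (considered as a function of $\delta$ over the range $\delta>M(\epsilon,\alpha^\dagger)$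 where it is positive). *)

(* Defs.v *)
From Stdlib Require Import Reals.
From Coquelicot Require Import Coquelicot.
Open Scope R_scope.

Definition phi (x : R) : R := exp (- x ^ 2 / 2) / sqrt (2 * PI).

Definition Phi (x : R) : R :=
  RInt_gen phi (Rbar_locally m_infty) (at_point x).

Definition Mfun (eps alpha : R) : R :=
  eps * (1 + alpha ^ 2)
  + (1 - eps) * (2 * (1 + alpha ^ 2) * Phi (- alpha) - 2 * alpha * phi alpha).

Definition is_opt_threshold (eps adag : R) : Prop :=
  0 <= adag /\ forall alpha, 0 <= alpha -> Mfun eps adag <= Mfun eps alpha.

(* State evolution (mu -> oo), sigma_w^2 = delta * sigma0^2:
   (sigma_e^{t+1})^2 = (1/delta) * Err_{t+1} + sigma_w^2, Err_{t+1} = M (sigma_e^t)^2.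
   A fixed point s = (sigma_e^oo)^2 > 0 gives the MSE Err_oo = M * s. *)
Definition SE_fixed_point (Mv delta sigma0sq s : R) : Prop :=
  0 < s /\ s = / delta * (Mv * s) + delta * sigma0sq.

Definition is_AMP_MSE (Mv sigma0sq : R) (Err : R -> R) : Prop :=
  forall delta, Mv < delta ->
    exists s, SE_fixed_point Mv delta sigma0sq s /\ Err delta = Mv * s.

(* Main.v *)
Require Import Defs.
From Stdlib Require Import Reals Lra Psatz ssreflect.
From Coquelicot Require Import Coquelicot.
Open Scope R_scope.

Lemma c_pos : 0 < sqrt (2 * PI).
Proof. apply sqrt_lt_R0. generalize PI_RGT_0; lra. Qed.

Lemma phi_pos (x : R) : 0 < phi x.
Proof. unfold phi. apply Rdiv_lt_0_compat. apply exp_pos. apply c_pos. Qed.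

Lemma phi_deriv (x : R) : is_derive phi x (- x * phi x).
Proof.
  unfold phi. generalize c_pos; intro Hc.
  auto_derive. auto. replace (- (x * (x * 1)) * / 2) with (- x ^ 2 / 2) by (simpl; field). field. lra.
Qed.

Lemma phi_cont (x : R) : continuous phi x.
Proof. apply: (@ex_derive_continuous R_AbsRing R_NormedModule). eexists. apply phi_deriv. Qed.

Lemma ex_phi a b : ex_RInt phi a b.
Proof. apply: (@ex_RInt_continuous R_CompleteNormedModule). intros; apply phi_cont. Qed.

Lemma exp_le' a b : a <= b -> exp a <= exp b.
Proof. intros [H|H]. left; apply exp_increasing; auto. subst; lra. Qed.

Lemma F_bound a x : a <= x -> RInt phi a x <= exp (x + /2) / sqrt (2*PI).
Proof.
  intros Hax. generalize c_pos; intro Hc.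
  set E := fun t => exp (t + /2) / sqrt (2*PI).
  assert (HE : is_RInt E a x (minus (E x) (E a))).
  { apply: (@is_RInt_derive R_CompleteNormedModule).
    - intros t _. unfold E. auto_derive. auto. field. lra.
    - intros t _. unfold E. apply: (@ex_derive_continuous R_AbsRing R_NormedModule). auto_derive. auto. }
  apply Rle_trans with (RInt E a x).
  - apply RInt_le; auto. apply ex_phi. eexists; eauto.
    intros t _. unfold phi, E. unfold Rdiv. apply Rmult_le_compat_r.
    left; apply Rinv_0_lt_compat; auto.
    apply exp_le'. have H := pow2_ge_0 (t+1). simpl in H |- *. nra.
  - have -> : RInt E a x = E x - E a by apply: is_RInt_unique.
    unfold E. assert (0 < exp (a + /2) / sqrt (2*PI)).
    apply Rdiv_lt_0_compat; auto; apply exp_pos. lra.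
Qed.

Lemma F_mono a a' x : a <= a' -> RInt phi a' x <= RInt phi a x.
Proof.
  intros H. rewrite <- (RInt_Chasles phi a a' x) by apply ex_phi.
  assert (0 <= RInt phi a a').
  { apply RInt_ge_0; auto. apply ex_phi. intros; left; apply phi_pos. }
  unfold plus; simpl. lra.
Qed.

Lemma Phi_exists x : exists L, Phi x = L /\ forall n, RInt phi (x - INR n) x <= L.
Proof.
  set u := fun n => RInt phi (x - INR n) x.
  assert (Hinc : forall n, u n <= u (S n)).
  { intro n. unfold u. apply F_mono. rewrite S_INR. lra. }
  assert (Hb : forall n, u n <= exp (x + /2) / sqrt (2*PI)).
  { intro n. unfold u. apply F_bound. generalize (pos_INR n); lra. }
  destruct (ex_finite_lim_seq_incr u _ Hinc Hb) as [L HL].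
  exists L. split.
  2:{ intro n. apply (is_lim_seq_incr_compare u L HL Hinc n). }
  apply is_RInt_gen_unique.
  intros P [eps HP]. simpl.
  destruct (proj2 (is_lim_seq_spec u L) HL eps) as [N HN].
  exists (fun a => a < x - INR N) (fun b => b = x).
  - exists (x - INR N). auto.
  - reflexivity.
  - intros a b Ha Hb'. subst b. exists (RInt phi a x). split.
    apply RInt_correct, ex_phi.
    apply HP.
    destruct (nfloor_ex (x - a)) as [M HM]. generalize (pos_INR N); lra.
    assert (u N <= RInt phi a x) by (apply F_mono; lra).
    assert (RInt phi a x <= u (S M)).
    { unfold u. apply F_mono. rewrite S_INR. lra. }
    assert (u (S M) <= L) by (apply (is_lim_seq_incr_compare u L HL Hinc)).
    specialize (HN N (Nat.le_refl N)).
    change (Rabs (RInt phi a x - L) < eps).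
    apply Rabs_def1; apply Rabs_def2 in HN; lra.
Qed.

Lemma phi_even (x : R) : phi (- x) = phi x.
Proof. unfold phi. replace ((- x) ^ 2) with (x ^ 2) by ring. reflexivity. Qed.

Lemma tail_bound (al : R) (n : nat) : 0 <= al -> al <= INR n ->
  al * phi al <= (1 + al ^ 2) * RInt phi (- al - INR n) (- al).
Proof.
  intros H0 Hn.
  have Hc := c_pos.
  set a := - al - INR n.
  set g := fun t => phi t * (1 - 2 * al * t - t ^ 2).
  set K := fun t => (t + 2 * al) * phi t.
  assert (HK : is_RInt g a (- al) (minus (K (- al)) (K a))).
  { apply: (@is_RInt_derive R_CompleteNormedModule).
    - intros t _. unfold K, g, phi. auto_derive. auto.
      replace (exp (- (t * (t * 1)) * / 2)) with (exp (- t ^ 2 / 2)) by (f_equal; simpl; field).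
      field. lra.
    - intros t _. unfold g, phi. apply: (@ex_derive_continuous R_AbsRing R_NormedModule).
      auto_derive. auto. }
  have Hg : RInt g a (- al) = K (- al) - K a by apply: is_RInt_unique.
  have Hle : RInt g a (- al) <= RInt (fun t => scal (1 + al ^ 2) (phi t)) a (- al).
  { apply RInt_le.
    - unfold a; generalize (pos_INR n); lra.
    - eexists; eauto.
    - apply: ex_RInt_scal. apply ex_phi.
    - intros t _. unfold g. rewrite /scal /= /mult /=.
      have := phi_pos t. have := pow2_ge_0 (t + al). simpl. nra. }
  rewrite RInt_scal in Hle; last by apply ex_phi.
  rewrite /scal /= /mult /= in Hle.
  rewrite Hg in Hle. unfold K in Hle. rewrite phi_even in Hle.
  have := phi_pos a. unfold a in *. nra.
Qed.

Lemma M_pos eps adag : 0 < eps <= 1 -> 0 <= adag -> 0 < Mfun eps adag.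
Proof.
  intros He Ha.
  destruct (Phi_exists (- adag)) as [L [HL Hn]].
  destruct (nfloor_ex adag Ha) as [n Hnf].
  have Ht := tail_bound adag (S n) Ha ltac:(rewrite S_INR; lra).
  have Hu := Hn (S n).
  have Hsq := pow2_ge_0 adag.
  have Hb : adag * phi adag <= (1 + adag ^ 2) * Phi (- adag).
  { rewrite HL. apply: Rle_trans; first exact Ht. apply Rmult_le_compat_l; lra. }
  unfold Mfun. nra.
Qed.

Theorem theorem1 (eps sigma0sq adag : R) (Err : R -> R) :
  0 < eps <= 1 -> 0 < sigma0sq ->
  is_opt_threshold eps adag ->
  is_AMP_MSE (Mfun eps adag) sigma0sq Err ->
  Mfun eps adag < 2 * Mfun eps adag /\
  (forall delta, Mfun eps adag < delta -> delta <> 2 * Mfun eps adag ->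
     Err (2 * Mfun eps adag) < Err delta).
Proof.
  intros He Hs [Ha _] HE.
  have HM := M_pos eps adag He Ha.
  set M := Mfun eps adag in HM HE *.
  split; first lra.
  intros d Hd Hne.
  destruct (HE (2 * M) ltac:(lra)) as [s1 [[Hs1 Hf1] HE1]].
  destruct (HE d Hd) as [s [[Hs0 Hf] HEd]].
  rewrite HE1 HEd.
  have E1 : s1 * (2 * M) = M * s1 + (2 * M) * (2 * M) * sigma0sq.
  { rewrite {1}Hf1. field. lra. }
  have E2 : s * d = M * s + d * d * sigma0sq.
  { rewrite {1}Hf. field. lra. }
  have Hs1v : s1 = 4 * M * sigma0sq.
  { apply (Rmult_eq_reg_r M); last lra. nra. }
  rewrite Hs1v.
  apply Rmult_lt_compat_l; first lra.
  have Hdm : 0 < d - 2 * M \/ d - 2 * M < 0 by lra.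
  have Hsq : 0 < (d - 2 * M) ^ 2 by (destruct Hdm; nra).
  apply (Rmult_lt_reg_r (d - M)); first lra.
  nra.
Qed.
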